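(* Let $k$ be a number field with ring of integers $\mathcal{O}_k$, $\mathcal{A}$ a quaternion algebra over $k$, $\mathcal{O}\subset\mathcal{A}$ an order, and $I\subset\mathcal{O}_k$ an ideal. For any $\gamma\in\mathcal{O}^1(I)$ we have $\mathrm{tr}(\gamma)\equiv 2 \pmod{I^2}$.
   Context: $\mathrm{tr}$ denotes the reduced trace of $\mathcal{A}$, $\mathcal{O}^1$ the group of elements of $\mathcal{O}$ of reduced norm one, $I\mathcal{O}=\{\sum_j t_jw_j: t_j\in I,\ w_j\in\mathcal{O}\}$, and $\mathcal{O}^1(I)=\{\gamma\in\mathcal{O}^1:\gamma-1\in I\mathcal{O}\}$. *)

(* Defs.v *)
From HB Require Import structures.
From mathcomp Require Import all_boot all_order all_algebra all_field.
Set Implicit Arguments. Unset Strict Implicit. Unset Printing Implicit Defensive.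
Import GRing.Theory.
Local Open Scope ring_scope.

(* A number field is modelled as a finite-dimensional field extension
   [k : fieldExtType rat] of Q. *)

(* Ring of integers O_k: elements of k integral over Z. *)
Definition integral (k : fieldExtType rat) (x : k) : Prop :=
  exists p : {poly int}, p \is monic /\ root (map_poly (fun z : int => z%:~R) p) x.

(* Ideals of O_k, as subsets of k. *)
Definition is_ideal (k : fieldExtType rat) (I : k -> Prop) : Prop :=
  [/\ forall x, I x -> integral x,
      I 0,
      forall x y, I x -> I y -> I (x + y)
    & forall r x, integral r -> I x -> I (r * x)].

Definition ideal_sq (k : fieldExtType rat) (I : k -> Prop) (x : k) : Prop :=
  exists (n : nat) (s t : 'I_n -> k),
    (forall i, I (s i)) /\ (forall i, I (t i)) /\ x = \sum_(i < n) s i * t i.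

(* The quaternion algebra (a,b)_k with basis 1, i, j, ij, i^2 = a, j^2 = b,
   ij = -ji. Elements are coordinate rows (x0,x1,x2,x3). *)
Definition quat (k : fieldExtType rat) := 'rV[k]_4.

Definition qc (k : fieldExtType rat) (x : quat k) (n : nat) : k := x ord0 (inord n).

Definition qmul (k : fieldExtType rat) (a b : k) (x y : quat k) : quat k :=
  let x0 := qc x 0 in let x1 := qc x 1 in let x2 := qc x 2 in let x3 := qc x 3 in
  let y0 := qc y 0 in let y1 := qc y 1 in let y2 := qc y 2 in let y3 := qc y 3 in
  \row_(i < 4) [:: x0 * y0 + a * x1 * y1 + b * x2 * y2 - a * b * x3 * y3;
                   x0 * y1 + x1 * y0 - b * x2 * y3 + b * x3 * y2;
                   x0 * y2 + x2 * y0 + a * x1 * y3 - a * x3 * y1;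
                   x0 * y3 + x3 * y0 + x1 * y2 - x2 * y1]`_i.

Definition qone (k : fieldExtType rat) : quat k := \row_(i < 4) (if i == 0 :> nat then 1 else 0).

Definition qtr (k : fieldExtType rat) (x : quat k) : k := 2 * qc x 0.
Definition qnrd (k : fieldExtType rat) (a b : k) (x : quat k) : k :=
  qc x 0 ^+ 2 - a * qc x 1 ^+ 2 - b * qc x 2 ^+ 2 + a * b * qc x 3 ^+ 2.

(* An O_k-order in (a,b)_k: a subring with 1 which is a finitely generated
   O_k-module spanning the algebra over k (a complete O_k-lattice). *)
Definition is_order (k : fieldExtType rat) (a b : k) (O : quat k -> Prop) : Prop :=
  O (qone k) /\
  (forall x y, O x -> O y -> O (x + y)) /\
  (forall x, O x -> O (- x)) /\
  (forall x y, O x -> O y -> O (qmul a b x y)) /\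
  (forall r x, integral r -> O x -> O (r *: x)) /\
  (exists s : seq (quat k), forall x, O x <->
     exists c : 'I_(size s) -> k, (forall i, integral (c i)) /\
                                  x = \sum_(i < size s) c i *: s`_i) /\
  (exists s : seq (quat k), (forall i, (i < size s)%N -> O s`_i) /\
     forall x : quat k, exists c : 'I_(size s) -> k,
                                  x = \sum_(i < size s) c i *: s`_i).

Definition ideal_order (k : fieldExtType rat) (I : k -> Prop) (O : quat k -> Prop)
  (x : quat k) : Prop :=
  exists (n : nat) (t : 'I_n -> k) (w : 'I_n -> quat k),
    (forall j, I (t j)) /\ (forall j, O (w j)) /\ x = \sum_(j < n) t j *: w j.

Definition O1I (k : fieldExtType rat) (a b : k) (O : quat k -> Prop) (I : k -> Prop)
  (g : quat k) : Prop :=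
  [/\ O g, qnrd a b g = 1 & ideal_order I O (g - qone k)].

(* Main.v *)
Require Import Defs.
From HB Require Import structures.
From mathcomp Require Import all_boot all_order all_algebra all_field.
From mathcomp Require Import ring.
Import GRing.Theory.
Local Open Scope ring_scope.
Set Implicit Arguments. Unset Strict Implicit.
Definition pr (k : comNzRingType) (c : k) := (k * k)%type.
Section Pr.
Variables (k : comNzRingType) (c : k).
Local Notation pr := (@pr k c).
HB.instance Definition _ := GRing.Zmodule.on pr.
Definition prmul (x y : pr) : pr := (x.1*y.1 + c*(x.2*y.2), x.1*y.2 + x.2*y.1).
Definition prone : pr := (1, 0).
Lemma prmulA : associative prmul.
Proof. move=> [x1 x2] [y1 y2] [z1 z2]; rewrite /prmul /=. congr pair. all: ring. Qed.
Lemma prmulC : commutative prmul.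
Proof. by move=> [x1 x2] [y1 y2]; rewrite /prmul /=; congr pair => /=; ring. Qed.
Lemma prmul1 : left_id prone prmul.
Proof. by move=> [x1 x2]; rewrite /prmul /=; congr pair => /=; ring. Qed.
Lemma prmulDl : left_distributive prmul +%R.
Proof. by move=> [x1 x2] [y1 y2] [z1 z2]; rewrite /prmul /=; congr pair => /=; ring. Qed.
Lemma prone_neq0 : prone != 0.
Proof. by apply/eqP => /(congr1 fst) /= /eqP; rewrite oner_eq0. Qed.
HB.instance Definition _ := GRing.Zmodule_isComNzRing.Build pr prmulA prmulC prmul1 prmulDl prone_neq0.
Lemma prmulE (x y : pr) : x * y = prmul x y. Proof. by []. Qed.
Definition prinj (x : k) : pr := (x, 0).
Lemma prinj_zmod : zmod_morphism prinj.
Proof. by move=> x y; rewrite /prinj; congr pair => /=; rewrite subr0. Qed.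
HB.instance Definition _ := GRing.isZmodMorphism.Build k pr prinj prinj_zmod.
Lemma prinj_monoid : monoid_morphism prinj.
Proof. split=> // x y; rewrite /prinj prmulE /prmul /=; congr pair; ring. Qed.
HB.instance Definition _ := GRing.isMonoidMorphism.Build k pr prinj prinj_monoid.
Definition prconj (x : pr) : pr := (x.1, - x.2).
Lemma prconj_zmod : zmod_morphism prconj.
Proof. by move=> [x1 x2] [y1 y2]; rewrite /prconj; congr pair => /=; ring. Qed.
HB.instance Definition _ := GRing.isZmodMorphism.Build pr pr prconj prconj_zmod.
Lemma prconj_monoid : monoid_morphism prconj.
Proof. split=> [|[x1 x2] [y1 y2]]; rewrite /prconj ?prmulE /prmul /=; congr pair; ring. Qed.
HB.instance Definition _ := GRing.isMonoidMorphism.Build pr pr prconj prconj_monoid.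
Lemma prconj_inj x : prconj (prinj x) = prinj x.
Proof. by rewrite /prconj /prinj /= oppr0. Qed.
End Pr.

Section Integ.
Variable k : fieldExtType rat.
Definition intg (x : k) := integralOver (intr : int -> k) x.

Lemma integralE (x : k) : integral x <-> intg x.
Proof. by split=> [[p [mp rp]]|[p mp rp]]; exists p. Qed.

Lemma intg_add x y : intg x -> intg y -> intg (x + y).
Proof. exact: integral_add. Qed.
Lemma intg_sub x y : intg x -> intg y -> intg (x - y).
Proof. exact: integral_sub. Qed.
Lemma intg_opp x : intg x -> intg (- x).
Proof. exact: integral_opp. Qed.
Lemma intg_mul x y : intg x -> intg y -> intg (x * y).
Proof. exact: integral_mul. Qed.
Lemma intg_nat n : intg n%:R.
Proof. exact: integral_nat. Qed.
Lemma intg0 : intg 0. Proof. exact: integral0. Qed.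
Lemma intg1 : intg 1. Proof. exact: integral1. Qed.

Definition PI (q : {poly k}) := forall i, intg q`_i.
Lemma PI_add p q : PI p -> PI q -> PI (p + q).
Proof. by move=> hp hq i; rewrite coefD; apply: intg_add. Qed.
Lemma PI_opp p : PI p -> PI (- p).
Proof. by move=> hp i; rewrite coefN; apply: intg_opp. Qed.
Lemma PI_C x : intg x -> PI x%:P.
Proof. by move=> hx i; rewrite coefC; case: eqP => _ //; apply: intg0. Qed.
Lemma PI_X : PI 'X.
Proof. by move=> i; rewrite coefX; case: eqP => _; [apply: intg1|apply: intg0]. Qed.
Lemma PI_mul p q : PI p -> PI q -> PI (p * q).
Proof.
move=> hp hq i; rewrite coefM.
apply: (big_ind (fun x => intg x)); [exact: intg0|exact: intg_add|].
by move=> j _; apply: intg_mul.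
Qed.
Lemma PI_muln p n : PI p -> PI (p *+ n).
Proof. by move=> hp i; rewrite coefMn -mulr_natr; apply: intg_mul => //; apply: intg_nat. Qed.
Lemma PI_1 : PI 1.
Proof. by apply: PI_C; apply: intg1. Qed.
Lemma PI_exp p n : PI p -> PI (p ^+ n).
Proof. by move=> hp; elim: n => [|n IH]; [rewrite expr0; apply: PI_1|rewrite exprS; apply: PI_mul]. Qed.

Lemma PI_det n (A : 'M[{poly k}]_n) : (forall i j, PI (A i j)) -> PI (\det A).
Proof.
move=> hA; rewrite /determinant.
apply: (big_ind PI); [exact: PI_C intg0|exact: PI_add|].
move=> s _; apply: PI_mul; first by apply: PI_exp; apply: PI_opp; apply: PI_1.
by apply: (big_ind PI); [exact: PI_1|exact: PI_mul|move=> i _; apply: hA].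
Qed.

Lemma PI_char_poly n (M : 'M[k]_n) : (forall i j, intg (M i j)) -> PI (char_poly M).
Proof.
move=> hM; apply: PI_det => i j; rewrite !mxE.
by apply: PI_add; [apply: PI_muln; apply: PI_X|apply: PI_opp; apply: PI_C].
Qed.

Lemma PI_seq (q : {poly k}) : PI q -> {in q : seq k, integralRange (intr : int -> k)}.
Proof. by move=> h; apply/integral_poly. Qed.

End Integ.

Section Quat.
Variables (k : fieldExtType rat) (a b : k).
Local Notation quat := (quat k).

Lemma qcD (x y : quat) n : qc (x + y) n = qc x n + qc y n.
Proof. by rewrite /qc mxE. Qed.
Lemma qcN (x : quat) n : qc (- x) n = - qc x n.
Proof. by rewrite /qc mxE. Qed.
Lemma qcB (x y : quat) n : qc (x - y) n = qc x n - qc y n.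
Proof. by rewrite qcD qcN. Qed.
Lemma qcZ e (x : quat) n : qc (e *: x) n = e * qc x n.
Proof. by rewrite /qc mxE. Qed.
Lemma qc0 n : qc (0 : quat) n = 0.
Proof. by rewrite /qc mxE. Qed.
Lemma qc_sum m (F : 'I_m -> quat) n : qc (\sum_(i < m) F i) n = \sum_(i < m) qc (F i) n.
Proof.
apply: (big_morph (fun x => qc x n)); [by move=> x y; rewrite qcD|by rewrite qc0].
Qed.
Lemma quat_ext (x y : quat) : (forall n, (n < 4)%N -> qc x n = qc y n) -> x = y.
Proof.
move=> h; apply/rowP => i; have := h i (ltn_ord i).
by rewrite /qc inord_val => ->; rewrite (ord1 ord0).
Qed.
Lemma qone0 : qc (qone k) 0 = 1. Proof. by rewrite /qc /qone mxE inordK. Qed.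
Lemma qone1 : qc (qone k) 1 = 0. Proof. by rewrite /qc /qone mxE inordK. Qed.
Lemma qone2 : qc (qone k) 2 = 0. Proof. by rewrite /qc /qone mxE inordK. Qed.
Lemma qone3 : qc (qone k) 3 = 0. Proof. by rewrite /qc /qone mxE inordK. Qed.

Lemma qmul0 x y : qc (qmul a b x y) 0 =
  qc x 0 * qc y 0 + a * qc x 1 * qc y 1 + b * qc x 2 * qc y 2 - a * b * qc x 3 * qc y 3.
Proof. by rewrite {1}/qc /qmul mxE inordK. Qed.
Lemma qmul1 x y : qc (qmul a b x y) 1 =
  qc x 0 * qc y 1 + qc x 1 * qc y 0 - b * qc x 2 * qc y 3 + b * qc x 3 * qc y 2.
Proof. by rewrite {1}/qc /qmul mxE inordK. Qed.
Lemma qmul2 x y : qc (qmul a b x y) 2 =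
  qc x 0 * qc y 2 + qc x 2 * qc y 0 + a * qc x 1 * qc y 3 - a * qc x 3 * qc y 1.
Proof. by rewrite {1}/qc /qmul mxE inordK. Qed.
Lemma qmul3 x y : qc (qmul a b x y) 3 =
  qc x 0 * qc y 3 + qc x 3 * qc y 0 + qc x 1 * qc y 2 - qc x 2 * qc y 1.
Proof. by rewrite {1}/qc /qmul mxE inordK. Qed.

Lemma sum4 (F : 'I_4 -> k) :
  \sum_(i < 4) F i = F (inord 0) + F (inord 1) + F (inord 2) + F (inord 3).
Proof.
rewrite !big_ord_recl big_ord0 addr0 !addrA /=.
by congr (_ + _ + _ + _); congr F; apply: val_inj; rewrite /= inordK.
Qed.

Definition qe (i : 'I_4) : quat := \row_(l < 4) ((l == i)%:R : k).
Lemma qeE (m l : nat) : (m < 4)%N -> (l < 4)%N -> qc (qe (inord m)) l = (l == m)%:R.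
Proof. by move=> hm hl; rewrite /qc /qe mxE -val_eqE /= !inordK. Qed.

Definition Rw (w : quat) : 'M[k]_4 := \matrix_(i < 4, j < 4) qc (qmul a b w (qe i)) j.

Lemma Rw_mul w x : x *m Rw w = qmul a b w x.
Proof.
apply: quat_ext => n hn.
rewrite {1}/qc mxE sum4 !mxE inordK //.
rewrite -/(qc x 0) -/(qc x 1) -/(qc x 2) -/(qc x 3).
case: n hn => [|[|[|[|n]]]] // _;
  rewrite ?qmul0 ?qmul1 ?qmul2 ?qmul3 !qeE //=; ring.
Qed.

End Quat.

Lemma intertwine (k : fieldExtType rat) n (S : 'M[k]_(n.+1, 4)) (M : 'M[k]_n.+1) (A : 'M[k]_4) :
  S *m A = M *m S -> forall q, S *m horner_mx A q = horner_mx M q *m S.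
Proof.
move=> hSA; elim/poly_ind => [|q e IH]; first by rewrite !rmorph0 mulmx0 mul0mx.
rewrite !rmorphD !rmorphM /= !horner_mx_X !horner_mx_C -!mulmxE.
rewrite mulmxDr mulmxDl mulmxA IH -[_ *m S *m A]mulmxA hSA !mulmxA.
by rewrite mul_mx_scalar mul_scalar_mx.
Qed.

Section Key.
Variables (k : fieldExtType rat) (a b : k) (w : quat k).
Definition cw := a * qc w 1 ^+ 2 + b * qc w 2 ^+ 2 - a * b * qc w 3 ^+ 2.
Definition psi (z : pr cw) : quat k := z.1 *: qone k + z.2 *: (w - qc w 0 *: qone k).

Lemma key (beta : k) (hb : beta = 1 \/ [/\ qc w 1 = 0, qc w 2 = 0 & qc w 3 = 0]) (q : {poly k}) :
  qone k *m horner_mx (Rw a b w) q = psi ((map_poly (prinj cw) q).[(qc w 0, beta)]).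
Proof.
elim/poly_ind: q => [|q e IH].
  by rewrite !rmorph0 mulmx0 horner0 /psi /= !scale0r addr0.
rewrite !rmorphD !rmorphM /= !horner_mx_X !horner_mx_C -!mulmxE.
rewrite map_polyX map_polyC hornerD hornerMX hornerC /=.
rewrite mulmxDr mulmxA IH Rw_mul mul_mx_scalar.
move: (_.[_]) => [z1 z2].
apply: quat_ext => n hn.
rewrite /psi prmulE /prmul /= /cw.
case: n hn => [|[|[|[|n]]]] // _;
  rewrite qcD ?qmul0 ?qmul1 ?qmul2 ?qmul3 !(qcD, qcZ, qcN, qone0, qone1, qone2, qone3);
  case: hb => [->|[-> -> ->]]; ring.
Qed.
End Key.

Section PrInt.
Variables (k : fieldExtType rat) (c : k).
Lemma intg_prinj x : intg x -> integralOver (intr : int -> pr c) (prinj c x).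
Proof.
move=> /(integral_rmorph (prinj c)) [p mp rp]; exists p => //.
have -> : map_poly (intr : int -> pr c) p = map_poly (prinj c \o intr) p.
  by apply: eq_map_poly => z /=; rewrite rmorph_int.
exact: rp.
Qed.
Lemma intg_of_prinj x : integralOver (intr : int -> pr c) (prinj c x) -> intg x.
Proof.
case=> p mp rp; exists p => //.
have e : map_poly (intr : int -> pr c) p = map_poly (prinj c) (map_poly intr p).
  by rewrite -map_poly_comp; apply: eq_map_poly => z /=; rewrite rmorph_int.
move: rp; rewrite e /root horner_map => /eqP /(congr1 fst) /= ->.
by rewrite eqxx.
Qed.
End PrInt.

Lemma nrd_intg (k : fieldExtType rat) (a b : k) (O : quat k -> Prop)
  (hO : is_order a b O) (w : quat k) (hw : O w) : intg (qnrd a b w).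
Proof.
case: hO => h1 [hadd [hneg [hmul [hscal [[s hs] _]]]]].
set n := size s.
pose g (i : 'I_n.+1) : quat k := (0 :: s)`_i.
have O0 : O 0.
  by rewrite -(subrr (qone k)); apply: hadd => //; apply: hneg.
have Og : forall i, O (g i).
  move=> i; rewrite /g; case: i => [[|j] hj] //=.
  apply/hs; exists (fun l : 'I_n => ((l : nat) == j)%:R); split.
    by move=> l; apply/integralE; case: eqP => _; [apply: intg1|apply: intg0].
  have hj' : (j < n)%N by [].
  rewrite (bigD1 (Ordinal hj')) //= eqxx scale1r big1 ?addr0 // => l hl.
  have [e|ne] := eqVneq (l : nat) j; last by rewrite mulr0n scale0r.
  by move: hl => /negP []; apply/eqP/val_inj.
have span : forall x, O x -> exists cf : 'I_n.+1 -> k,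
    (forall i, intg (cf i)) /\ x = \sum_(i < n.+1) cf i *: g i.
  move=> x /hs [cf [hcf ->]].
  exists (fun i => if unlift ord0 i is Some j then cf j else 0); split.
    by move=> i; case: (unlift ord0 i) => [j|]; [apply/integralE/hcf | apply: intg0].
  rewrite big_ord_recl /= unlift_none scale0r add0r.
  by apply: eq_bigr => j _; rewrite liftK /g lift0.
have hM : forall i : 'I_n.+1, exists cf : 'I_n.+1 -> k,
    (forall j, intg (cf j)) /\ qmul a b w (g i) = \sum_j cf j *: g j.
  by move=> i; apply: span; apply: hmul => //; apply: Og.
have [M hM'] := fin_all_exists hM.
pose Mx := \matrix_(i < n.+1, j < n.+1) M i j.
pose S := \matrix_(i < n.+1) g i.
have hS : S *m Rw a b w = Mx *m S.
  apply/row_matrixP => i; rewrite !row_mul rowK Rw_mul mulmx_sum_row (proj2 (hM' i)).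
  by apply: eq_bigr => j _; rewrite !mxE rowK.
have [cq [_ hq]] := span _ h1.
have hone : qone k = (\row_j cq j) *m S.
  by rewrite {1}hq mulmx_sum_row; apply: eq_bigr => j _; rewrite mxE rowK.
have hchi : qone k *m horner_mx (Rw a b w) (char_poly Mx) = 0.
  by rewrite hone -mulmxA (intertwine hS) Cayley_Hamilton mul0mx mulmx0.
have PIchi : PI (char_poly Mx).
  by apply: PI_char_poly => i j; rewrite mxE; apply: (proj1 (hM' i)).
have monchi := char_poly_monic Mx.
have nrdE : qnrd a b w = qc w 0 ^+ 2 - cw a b w by rewrite /qnrd /cw; ring.
case: (boolP [&& qc w 1 == 0, qc w 2 == 0 & qc w 3 == 0]) =>
    [/and3P [/eqP e1 /eqP e2 /eqP e3] | hv].
  have := key a b (beta := 0) (or_intror (And3 e1 e2 e3)) (char_poly Mx).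
  rewrite hchi -[(qc w 0, 0)]/(prinj (cw a b w) (qc w 0)) horner_map.
  move=> /(congr1 (fun x => qc x 0)).
  rewrite qc0 /psi /= qcD !qcZ qcB qcZ qone0 /= => h.
  have r : root (char_poly Mx) (qc w 0).
    by apply/eqP; move: h; rewrite mulr1 mul0r addr0 => <-.
  have iw0 : intg (qc w 0) := integral_root_monic monchi r (PI_seq PIchi).
  rewrite nrdE /cw e1 e2 e3.
  have -> : a * 0 ^+ 2 + b * 0 ^+ 2 - a * b * 0 ^+ 2 = 0 by ring.
  by rewrite subr0 expr2; apply: intg_mul.
have := key a b (w := w) (beta := 1) (or_introl erefl) (char_poly Mx).
rewrite hchi.
set Q := map_poly (prinj (cw a b w)) (char_poly Mx).
set u : pr (cw a b w) := (qc w 0, 1).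
move=> hz.
have ru : root Q u.
  apply/eqP; move: hz; case: (Q.[u]) => [z1 z2] hz.
  have e0 := congr1 (fun x => qc x 0) hz.
  have e1 := congr1 (fun x => qc x 1) hz.
  have e2 := congr1 (fun x => qc x 2) hz.
  have e3 := congr1 (fun x => qc x 3) hz.
  move: e0 e1 e2 e3; rewrite /psi /= !(qc0, qcD, qcZ, qcN, qone0, qone1, qone2, qone3).
  rewrite !mulr0 !mulr1 !add0r !oppr0 !addr0 subrr mulr0 addr0 => <- e1 e2 e3.
  congr pair.
  apply: contraNeq hv => z2n0.
  move: e1 e2 e3; by move=> /esym/eqP; rewrite mulf_eq0 (negbTE z2n0) /= => -> /esym/eqP; rewrite mulf_eq0 (negbTE z2n0) /= => -> /esym/eqP; rewrite mulf_eq0 (negbTE z2n0) /= => ->.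
have monQ : Q \is monic by rewrite map_monic.
have cQ : {in Q : seq (pr (cw a b w)), integralRange (intr : int -> pr (cw a b w))}.
  by apply/integral_poly => i; rewrite coef_map; apply: intg_prinj; apply: PIchi.
have iu := integral_root_monic monQ ru cQ.
have ru' : root Q (prconj u).
  have eQ : map_poly (prconj (c := cw a b w)) Q = Q.
    by rewrite -map_poly_comp; apply: eq_map_poly => x /=; rewrite prconj_inj.
  by rewrite /root -eQ horner_map (eqP ru) rmorph0.
have iu' := integral_root_monic monQ ru' cQ.
have := integral_mul iu iu'.
have -> : u * prconj u = prinj (cw a b w) (qnrd a b w).
  by rewrite prmulE /prmul /prinj /prconj /= nrdE; congr pair; ring.
exact: intg_of_prinj.
Qed.

Section Ideal.
Variables (k : fieldExtType rat) (I : k -> Prop) (hI : is_ideal I).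

Lemma I_int x : I x -> intg x.
Proof. by case: hI => h _ _ _ /h /integralE. Qed.
Lemma I0 : I 0. Proof. by case: hI. Qed.
Lemma I_add x y : I x -> I y -> I (x + y). Proof. by case: hI => _ _ h _; apply: h. Qed.
Lemma I_mul r x : intg r -> I x -> I (r * x).
Proof. by case: hI => _ _ _ h /integralE; apply: h. Qed.
Lemma I_opp x : I x -> I (- x).
Proof. by move=> hx; rewrite -mulN1r; apply: I_mul => //; apply: intg_opp; apply: intg1. Qed.

Lemma isq0 : ideal_sq I 0.
Proof. by exists 0%N, (fun _ => 0), (fun _ => 0); split; [|split]; rewrite ?big_ord0 // => -[]. Qed.
Lemma isq_mul s t : I s -> I t -> ideal_sq I (s * t).
Proof.
move=> hs ht; exists 1%N, (fun _ => s), (fun _ => t); split; [by []|split; [by []|]].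
by rewrite big_ord1.
Qed.
Lemma isq_add x y : ideal_sq I x -> ideal_sq I y -> ideal_sq I (x + y).
Proof.
move=> [n1 [s1 [t1 [hs1 [ht1 ->]]]]] [n2 [s2 [t2 [hs2 [ht2 ->]]]]].
exists (n1 + n2)%N, (fun i => match split i with inl j => s1 j | inr j => s2 j end),
  (fun i => match split i with inl j => t1 j | inr j => t2 j end).
split; [by move=> i; case: (split i)|split; [by move=> i; case: (split i)|]].
have sl : forall i, split (lshift n2 i) = inl i := fun i => unsplitK (inl i).
have sr : forall i, split (rshift n1 i) = inr i := fun i => unsplitK (inr i).
by rewrite big_split_ord; congr (_ + _); apply: eq_bigr => i _; rewrite ?sl ?sr.
Qed.
Lemma isq_opp x : ideal_sq I x -> ideal_sq I (- x).
Proof.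
move=> [n [s [t [hs [ht ->]]]]]; exists n, (fun i => - s i), t.
split; [by move=> i; apply: I_opp|split => //].
by rewrite -sumrN; apply: eq_bigr => i _; rewrite mulNr.
Qed.
End Ideal.

Section Final.
Variables (k : fieldExtType rat) (a b : k).
Definition Bf (x y : quat k) : k :=
  2 * (qc x 0 * qc y 0 - a * qc x 1 * qc y 1 - b * qc x 2 * qc y 2 + a * b * qc x 3 * qc y 3).

Lemma nrdD x y : qnrd a b (x + y) = qnrd a b x + qnrd a b y + Bf x y.
Proof. by rewrite /qnrd /Bf !qcD; ring. Qed.
Lemma nrdZ t x : qnrd a b (t *: x) = t * (t * qnrd a b x).
Proof. by rewrite /qnrd !qcZ; ring. Qed.
Lemma BfD x y z : Bf (x + y) z = Bf x z + Bf y z.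
Proof. by rewrite /Bf !qcD; ring. Qed.
Lemma BfZr t x y : Bf x (t *: y) = t * Bf x y.
Proof. by rewrite /Bf !qcZ; ring. Qed.
Lemma BfZl t x y : Bf (t *: x) y = t * Bf x y.
Proof. by rewrite /Bf !qcZ; ring. Qed.
Lemma Bf0 y : Bf 0 y = 0.
Proof. by rewrite /Bf !qc0; ring. Qed.
Lemma nrd0 : qnrd a b 0 = 0.
Proof. by rewrite /qnrd !qc0; ring. Qed.

Lemma Bf_intg O (hO : is_order a b O) x y : O x -> O y -> intg (Bf x y).
Proof.
move=> hx hy.
have -> : Bf x y = qnrd a b (x + y) - qnrd a b x - qnrd a b y by rewrite nrdD; ring.
have hxy : O (x + y) by case: hO => _ [h _]; apply: h.
by apply: intg_sub; [apply: intg_sub|]; apply: (nrd_intg hO).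
Qed.

Lemma ind_main O (hO : is_order a b O) I (hI : is_ideal I) m (t : 'I_m -> k) (w : 'I_m -> quat k) :
  (forall j, I (t j)) -> (forall j, O (w j)) ->
  ideal_sq I (qnrd a b (\sum_(j < m) t j *: w j)) /\
  (forall w', O w' -> I (Bf (\sum_(j < m) t j *: w j) w')).
Proof.
elim: m t w => [|m IH] t w ht hw.
  rewrite big_ord0 nrd0; split; first exact: isq0.
  by move=> w' _; rewrite Bf0; apply: I0.
rewrite big_ord_recr /=.
have [IH1 IH2] := IH (fun j => t (widen_ord (leqnSn m) j)) (fun j => w (widen_ord (leqnSn m) j))
   (fun j => ht _) (fun j => hw _).
set y := \sum_(_ < _) _ in IH1 IH2 *.
split.
  rewrite nrdD nrdZ BfZr; apply: isq_add => //; [apply: isq_add => //|].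
    apply: isq_mul => //; rewrite mulrC; apply: I_mul => //; exact: (nrd_intg hO).
  by rewrite mulrC; apply: isq_mul => //; apply: IH2.
move=> w' hw'; rewrite BfD BfZl; apply: I_add => //; first exact: IH2.
by rewrite mulrC; apply: I_mul => //; apply: (Bf_intg hO).
Qed.
End Final.

Unset Implicit Arguments.

Theorem lemma7p2 (k : fieldExtType rat) (a b : k) (ha : a != 0) (hb : b != 0)
  (O : quat k -> Prop) (hO : is_order a b O)
  (I : k -> Prop) (hI : is_ideal I)
  (g : quat k) (hg : O1I a b O I g) :
  ideal_sq I (qtr g - 2).
Proof.
case: hg => hgO hn [m [t [w [ht [hw hx]]]]].
have e : qtr g - 2 = qnrd a b g - 1 - qnrd a b (g - qone k).
  by rewrite /qtr /qnrd !qcB qone0 qone1 qone2 qone3; ring.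
rewrite e hn subrr add0r hx.
apply: isq_opp => //.
by have [] := ind_main hO hI ht hw.
Qed.
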